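(* Let $G$ be a group. Suppose that for every integer $n\geq 1$ there exist a finitely generated group $K_n$ and an automorphism $f_n\colon K_n\to K_n$ such that (I) the subgroup $\{x\in K_n \mid f_n(x)=x\}$ of fixed points of $f_n$ is not finitely generated, and (II) $G$ contains a subgroup isomorphic to $K_n^n$, the direct product of $n$ copies of $K_n$. Then $G$ is intersection-saturated.
   Context: For an integer $n\geq 1$ write $[n]=\{1,\dots,n\}$. An $n$-configuration is a map $c\colon \mathcal{P}([n])\setminus\{\emptyset\}\to\{0,1\}$. An $n$-configuration $c$ is realisable in a group $G$ if there exist subgroups $H_1,\dots,H_n\leq G$ such that for every non-empty subset $I\subseteq[n]$, the subgroup $\bigcap_{i\in I}H_i$ is finitely generated if and only if $c(I)=0$. A group $G$ is intersection-saturated if for every $n\geq 1$, every $n$-configuration is realisable in $G$. *)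

(* Defs.v *)
From mathcomp Require Import all_boot.
Set Implicit Arguments. Unset Strict Implicit. Unset Printing Implicit Defensive.

Record group := Group {
  carrier :> Type;
  gmul : carrier -> carrier -> carrier;
  ginv : carrier -> carrier;
  gone : carrier;
  gmulA : forall x y z, gmul x (gmul y z) = gmul (gmul x y) z;
  gmul1x : forall x, gmul gone x = x;
  gmulx1 : forall x, gmul x gone = x;
  gmulVx : forall x, gmul (ginv x) x = gone;
  gmulxV : forall x, gmul x (ginv x) = gone
}.

Section GroupDefs.
Variable G : group.

Definition is_subgroup (H : G -> Prop) : Prop :=
  H (gone G) /\ (forall x y, H x -> H y -> H (gmul x y)) /\
  (forall x, H x -> H (ginv x)).

Fixpoint inlist (S : seq G) (x : G) : Prop :=
  if S is y :: S' then y = x \/ inlist S' x else False.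

Inductive generated (S : seq G) : G -> Prop :=
| gen_in : forall x, inlist S x -> generated S x
| gen_one : generated S (gone G)
| gen_mul : forall x y, generated S x -> generated S y -> generated S (gmul x y)
| gen_inv : forall x, generated S x -> generated S (ginv x).

Definition fg_subgroup (H : G -> Prop) : Prop :=
  exists S : seq G, forall x, H x <-> generated S x.

Definition fg_group : Prop := fg_subgroup (fun _ => True).
End GroupDefs.

Definition is_hom (G1 G2 : group) (f : G1 -> G2) : Prop :=
  forall x y, f (gmul x y) = gmul (f x) (f y).

Definition is_automorphism (K : group) (f : K -> K) : Prop :=
  is_hom f /\ bijective f.

(* G contains a subgroup isomorphic to K: there is an injective
   homomorphism K -> G (its image is such a subgroup). *)
Definition embeds (K G : group) : Prop :=
  exists f : K -> G, is_hom f /\ injective f.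

Section Power.
Variables (K : group) (n : nat).
Definition pw_mul (x y : {ffun 'I_n -> K}) : {ffun 'I_n -> K} :=
  [ffun i => gmul (x i) (y i)].
Definition pw_inv (x : {ffun 'I_n -> K}) : {ffun 'I_n -> K} :=
  [ffun i => ginv (x i)].
Definition pw_one : {ffun 'I_n -> K} := [ffun=> gone K].
Lemma pw_mulA x y z : pw_mul x (pw_mul y z) = pw_mul (pw_mul x y) z.
Proof. by apply/ffunP=> i; rewrite !ffunE gmulA. Qed.
Lemma pw_mul1x x : pw_mul pw_one x = x.
Proof. by apply/ffunP=> i; rewrite !ffunE gmul1x. Qed.
Lemma pw_mulx1 x : pw_mul x pw_one = x.
Proof. by apply/ffunP=> i; rewrite !ffunE gmulx1. Qed.
Lemma pw_mulVx x : pw_mul (pw_inv x) x = pw_one.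
Proof. by apply/ffunP=> i; rewrite !ffunE gmulVx. Qed.
Lemma pw_mulxV x : pw_mul x (pw_inv x) = pw_one.
Proof. by apply/ffunP=> i; rewrite !ffunE gmulxV. Qed.
Definition power : group :=
  @Group {ffun 'I_n -> K} pw_mul pw_inv pw_one
    pw_mulA pw_mul1x pw_mulx1 pw_mulVx pw_mulxV.
End Power.

(* n-configurations: maps from nonempty subsets of [n] = 'I_n to {0,1};
   here c : {set 'I_n} -> bool (true = 1), whose value at set0 is ignored. *)
Definition realisable (G : group) (n : nat) (c : {set 'I_n} -> bool) : Prop :=
  exists Hs : 'I_n -> (G -> Prop),
    (forall i, is_subgroup (Hs i)) /\
    (forall I : {set 'I_n}, I != set0 ->
       (fg_subgroup (fun x => forall i, i \in I -> Hs i x) <-> c I = false)).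

Definition intersection_saturated (G : group) : Prop :=
  forall n : nat, 0 < n -> forall c : {set 'I_n} -> bool, realisable G c.

(* Main.v *)
Require Import Defs.
From mathcomp Require Import all_boot.
From Stdlib Require List.
Set Implicit Arguments. Unset Strict Implicit. Unset Printing Implicit Defensive.

Lemma inv_uniq (G : group) (x y : G) : gmul y x = gone G -> y = ginv x.
Proof.
move=> h. by rewrite -[y]gmulx1 -(gmulxV x) gmulA h gmul1x.
Qed.

Lemma hom1 (G1 G2 : group) (p : G1 -> G2) : is_hom p -> p (gone G1) = gone G2.
Proof.
move=> hp. have h := hp (gone G1) (gone G1). rewrite gmul1x in h.
by rewrite -(gmulVx (p (gone G1))) {3}h gmulA gmulVx gmul1x.
Qed.

Lemma homV (G1 G2 : group) (p : G1 -> G2) x : is_hom p -> p (ginv x) = ginv (p x).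
Proof. move=> hp; apply: inv_uniq; by rewrite -hp gmulVx hom1. Qed.

Lemma ginv1 (G : group) : ginv (gone G) = gone G.
Proof. by rewrite -[ginv _]gmulx1 gmulVx. Qed.

Lemma inlist_map (G1 G2 : group) (p : G1 -> G2) S x :
  inlist S x -> inlist (map p S) (p x).
Proof. elim: S => //= y S IH [->|h]; [by left | right; exact: IH]. Qed.

Lemma inlist_pre (G1 G2 : group) (p : G1 -> G2) S y :
  inlist (map p S) y -> exists x, inlist S x /\ p x = y.
Proof.
elim: S => //= z S IH [<-|h]; first by exists z; split=> //; left.
by have [x [h1 h2]] := IH h; exists x; split=> //; right.
Qed.

Lemma gen_map (G1 G2 : group) (p : G1 -> G2) S x :
  is_hom p -> generated S x -> generated (map p S) (p x).
Proof.
move=> hp; elim=> {x}.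
- by move=> x h; apply: gen_in; apply: inlist_map.
- by rewrite hom1 //; apply: gen_one.
- by move=> x y _ h1 _ h2; rewrite hp; apply: gen_mul.
- by move=> x _ h; rewrite homV //; apply: gen_inv.
Qed.

Lemma gen_pre (G1 G2 : group) (p : G1 -> G2) S y :
  is_hom p -> generated (map p S) y -> exists x, generated S x /\ p x = y.
Proof.
move=> hp; elim=> {y}.
- move=> y h; have [x [h1 h2]] := inlist_pre h; exists x; split=> //; exact: gen_in.
- by exists (gone G1); split; [apply: gen_one | apply: hom1].
- move=> _ _ _ [x [h1 <-]] _ [y [h2 <-]]; exists (gmul x y); split; [exact: gen_mul| exact: hp].
- move=> _ _ [x [h1 <-]]; exists (ginv x); split; [exact: gen_inv | exact: homV].
Qed.

Lemma gen_mono (G : group) (S S' : seq G) x :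
  (forall z, inlist S z -> inlist S' z) -> generated S x -> generated S' x.
Proof.
move=> hs; elim=> {x}.
- by move=> x h; apply: gen_in; apply: hs.
- exact: gen_one.
- by move=> x y _ h1 _ h2; apply: gen_mul.
- by move=> x _ h; apply: gen_inv.
Qed.

Lemma gen_sub (G : group) (A : G -> Prop) S x :
  is_subgroup A -> (forall z, inlist S z -> A z) -> generated S x -> A x.
Proof.
move=> [h1 [hm hi]] hs; elim=> {x}.
- by move=> x h; apply: hs.
- exact: h1.
- by move=> x y _ a _ b; apply: hm.
- by move=> x _ a; apply: hi.
Qed.

Lemma fg_ext (G : group) (A B : G -> Prop) :
  (forall x, A x <-> B x) -> fg_subgroup A -> fg_subgroup B.
Proof.
move=> e [S hS]; exists S => x; split=> h.
- by apply/hS; apply/e.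
- by apply/e; apply/hS.
Qed.

Lemma img_fg (G1 G2 : group) (p : G1 -> G2) (A : G1 -> Prop) :
  is_hom p -> fg_subgroup A -> fg_subgroup (fun y => exists x, A x /\ p x = y).
Proof.
move=> hp [S hS]; exists (map p S) => y; split.
- by move=> [x [/hS h <-]]; apply: gen_map.
- move=> /(gen_pre hp) [x [/hS h1 h2]]; by exists x.
Qed.

Lemma lift_list (G1 G2 : group) (p : G1 -> G2) (A : G1 -> Prop) (S : seq G2) :
  (forall s, inlist S s -> exists x, A x /\ p x = s) ->
  exists S', map p S' = S /\ forall x, inlist S' x -> A x.
Proof.
elim: S => [|s S IH] h; first by exists [::].
have [x [hx <-]] := h s (or_introl erefl).
have [S' [e hS']] := IH (fun z hz => h z (or_intror hz)).
exists (x :: S'); split; first by rewrite /= e.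
by move=> z [<-|hz] //; apply: hS'.
Qed.

Lemma fg_pre (G1 G2 : group) (p : G1 -> G2) (A : G1 -> Prop) :
  is_hom p -> injective p -> is_subgroup A ->
  fg_subgroup (fun y => exists x, A x /\ p x = y) -> fg_subgroup A.
Proof.
move=> hp pinj hA [S hS].
have [S' [e hS']] : exists S', map p S' = S /\ forall x, inlist S' x -> A x.
  apply: lift_list => s hs; apply/hS; exact: gen_in.
exists S' => x; split.
- move=> hx; have : generated S (p x) by apply/hS; exists x.
  rewrite -e => /(gen_pre hp) [x' [h1 /pinj <-]] //.
- exact: gen_sub.
Qed.

Lemma img_sub (G1 G2 : group) (p : G1 -> G2) (A : G1 -> Prop) :
  is_hom p -> is_subgroup A -> is_subgroup (fun y => exists x, A x /\ p x = y).
Proof.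
move=> hp [h1 [hm hi]]; split; first by exists (gone G1); split=> //; apply: hom1.
split.
- move=> _ _ [x [hx <-]] [y [hy <-]]; exists (gmul x y); split; [exact: hm | exact: hp].
- move=> _ [x [hx <-]]; exists (ginv x); split; [exact: hi | exact: homV].
Qed.


Definition pTmul (K : group) (T : finType) (x y : {ffun T -> K}) : {ffun T -> K} :=
  [ffun i => gmul (x i) (y i)].
Definition pTinv (K : group) (T : finType) (x : {ffun T -> K}) : {ffun T -> K} :=
  [ffun i => ginv (x i)].
Definition pTone (K : group) (T : finType) : {ffun T -> K} := [ffun=> gone K].
Lemma pTmulA (K : group) (T : finType) (x y z : {ffun T -> K}) : pTmul x (pTmul y z) = pTmul (pTmul x y) z.
Proof. by apply/ffunP=> i; rewrite !ffunE gmulA. Qed.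
Lemma pTmul1x (K : group) (T : finType) (x : {ffun T -> K}) : pTmul (pTone K T) x = x.
Proof. by apply/ffunP=> i; rewrite !ffunE gmul1x. Qed.
Lemma pTmulx1 (K : group) (T : finType) (x : {ffun T -> K}) : pTmul x (pTone K T) = x.
Proof. by apply/ffunP=> i; rewrite !ffunE gmulx1. Qed.
Lemma pTmulVx (K : group) (T : finType) (x : {ffun T -> K}) : pTmul (pTinv x) x = pTone K T.
Proof. by apply/ffunP=> i; rewrite !ffunE gmulVx. Qed.
Lemma pTmulxV (K : group) (T : finType) (x : {ffun T -> K}) : pTmul x (pTinv x) = pTone K T.
Proof. by apply/ffunP=> i; rewrite !ffunE gmulxV. Qed.
Definition pT (K : group) (T : finType) : group :=
  @Defs.Group {ffun T -> K} (@pTmul K T) (@pTinv K T) (pTone K T)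
    (@pTmulA K T) (@pTmul1x K T) (@pTmulx1 K T) (@pTmulVx K T) (@pTmulxV K T).

Definition delta (K : group) (T : finType) (j : T) (a : K) : pT K T :=
  [ffun k => if k == j then a else gone K].

Lemma delta_hom (K : group) (T : finType) (j : T) : is_hom (fun a : K => delta j a).
Proof.
move=> a b; apply/ffunP=> k; rewrite /= /pTmul !ffunE.
by case: (k == j) => //; rewrite gmul1x.
Qed.

Fixpoint gens (K : group) (T : finType) (S : seq K) (l : seq T) : seq (pT K T) :=
  if l is j :: l' then map (delta j) S ++ gens S l' else [::].

Lemma inlist_In (G : group) (S : seq G) x : inlist S x <-> List.In x S.
Proof. elim: S => //= y S IH; by rewrite IH. Qed.

Lemma gens_in (K : group) (T : finType) (S : seq K) (l : seq T) j z :
  j \in l -> inlist (map (delta j) S) z -> inlist (gens S l) z.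
Proof.
elim: l => //= k l IH; rewrite in_cons => /orP [/eqP <-|h] hz;
  apply/inlist_In; apply/List.in_or_app.
- by left; apply/inlist_In.
- by right; apply/inlist_In; apply: IH.
Qed.

Lemma pow_fg (K : group) (T : finType) : fg_group K -> fg_group (pT K T).
Proof.
move=> [S hS]; exists (gens S (enum T)) => x; split=> // _.
suff key : forall (l : seq T) (y : pT K T), (forall j, j \in l -> j \in enum T) ->
  (forall k, k \notin l -> y k = gone K) -> generated (gens S (enum T)) y.
  apply: (key (enum T)) => // k /negP []; by rewrite mem_enum.
elim=> [|j l IH] y hl hy.
- have -> : y = gone (pT K T) by apply/ffunP=> k; rewrite /= ffunE hy.
  exact: gen_one.
- pose y' : pT K T := [ffun k => if k == j then gone K else y k].
  have -> : y = gmul (delta j (y j)) y'.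
    apply/ffunP=> k; rewrite /= /pTmul !ffunE.
    by case: eqP => [->|_]; rewrite ?gmulx1 ?gmul1x.
  apply: gen_mul.
  + apply: (@gen_mono _ (map (delta j) S)).
      by move=> z; apply: gens_in; apply: hl; rewrite in_cons eqxx.
    by apply: gen_map; [exact: delta_hom | apply/hS].
  + apply: IH.
      by move=> k hk; apply: hl; rewrite in_cons hk orbT.
    move=> k hkl; rewrite ffunE; case: (k =P j) => // /eqP hkj; apply: hy; by rewrite in_cons negb_or hkj.
Qed.


Definition succ (m : nat) (e : 'I_m.+1) : 'I_m.+1 := if e < m then inord e.+1 else ord0.

Definition edgeok (K : group) (f : K -> K) (m : nat) (y : 'I_m.+1 -> K) (e : 'I_m.+1) : Prop :=
  if e < m then y (succ e) = y e else y e = f (y ord0).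

Definition Phi (K : group) (f : K -> K) (m : nat) (m0 : 'I_m.+1) (y : 'I_m.+1 -> K) (j : 'I_m.+1) : K :=
  if j <= m0 then f (y j) else y j.

Definition erel (m : nat) (M : {set 'I_m.+1}) : rel 'I_m.+1 :=
  fun a b => ((a \notin M) && (b == succ a)) || ((b \notin M) && (a == succ b)).

Lemma edge_phi (K : group) (f : K -> K) (m : nat) (m0 : 'I_m.+1) (y : 'I_m.+1 -> K) e :
  injective f -> e != m0 -> (Phi f m0 y (succ e) = Phi f m0 y e <-> edgeok f y e).
Proof.
move=> finj hne; rewrite /edgeok /succ /Phi.
have hne' : (e : nat) != m0 by [].
case: ltnP => he.
- rewrite inordK; last by rewrite ltnS.
  have -> : (e.+1 <= m0) = (e <= m0).
    by apply/idP/idP => h; [exact: ltnW | rewrite ltn_neqAle hne' h].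
  case: (e <= m0); split=> [h|->] //; exact: finj.
- have -> : (e <= m0) = false.
    apply/negbTE; rewrite -ltnNge ltn_neqAle eq_sym hne' /=.
    by apply: leq_trans he; rewrite -ltnS.
  rewrite leq0n; split=> h; by rewrite h.
Qed.

Lemma erel_sym (m : nat) (M : {set 'I_m.+1}) : symmetric (erel M).
Proof. by move=> a b; rewrite /erel orbC. Qed.

Lemma eq_connect (K : group) (m : nat) (M : {set 'I_m.+1}) (z : 'I_m.+1 -> K) a b :
  (forall e, e \notin M -> z (succ e) = z e) -> connect (erel M) a b -> z a = z b.
Proof.
move=> hz /connectP [p hp ->]; elim: p a hp => //= c p IH a /andP [hac hp].
rewrite -(IH c hp); move: hac; rewrite /erel => /orP [/andP [h /eqP ->]|/andP [h /eqP ->]].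
- by rewrite hz.
- by rewrite hz.
Qed.

Lemma root_eq (K : group) (m : nat) (M : {set 'I_m.+1}) (z : 'I_m.+1 -> K) k :
  (forall e, e \notin M -> z (succ e) = z e) -> z (root (erel M) k) = z k.
Proof. move=> hz; symmetry; apply: (eq_connect hz); exact: connect_root. Qed.

Lemma root_succ (m : nat) (M : {set 'I_m.+1}) e :
  e \notin M -> root (erel M) (succ e) = root (erel M) e.
Proof.
move=> he; apply/eqP; rewrite (root_connect (sym_connect_sym (@erel_sym m M))).
apply: connect1; by rewrite /erel he eqxx orbT.
Qed.

Lemma edgeok_const (K : group) (f : K -> K) (m : nat) (b : K) e :
  f b = b -> edgeok f (fun _ : 'I_m.+1 => b) e.
Proof. by move=> h; rewrite /edgeok; case: (e < m). Qed.


Definition Tsp (m : nat) : finType := ({set 'I_m.+1} * 'I_m.+1)%type.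

Definition blk (K : group) (m : nat) (x : pT K (Tsp m)) (J : {set 'I_m.+1}) : 'I_m.+1 -> K :=
  fun k => x (J, k).

Definition Hsub (K : group) (f : K -> K) (m : nat) (c : {set 'I_m.+1} -> bool)
  (i : 'I_m.+1) (x : pT K (Tsp m)) : Prop :=
  forall J, c J = true ->
    (i \notin J -> forall k, x (J, k) = gone K) /\
    (i \in J -> forall e, (e == i) || (e \notin J) -> edgeok f (blk x J) e).

Definition Int (K : group) (f : K -> K) (m : nat) (c : {set 'I_m.+1} -> bool)
  (I : {set 'I_m.+1}) (x : pT K (Tsp m)) : Prop :=
  forall i, i \in I -> Hsub f c i x.

Lemma intP (K : group) (f : K -> K) (m : nat) (c : {set 'I_m.+1} -> bool)
  (I : {set 'I_m.+1}) (x : pT K (Tsp m)) :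
  f (gone K) = gone K -> I != set0 ->
  (Int f c I x <->
   forall J, c J = true ->
     (~~ (I \subset J) -> forall k, x (J, k) = gone K) /\
     (I \subset J -> forall e, e \notin J :\: I -> edgeok f (blk x J) e)).
Proof.
move=> f1 /set0Pn [i0 hi0]; split.
- move=> hx J hJ; split.
  + move=> /subsetPn [i hiI hiJ]; exact: ((hx i hiI J hJ).1 hiJ).
  + move=> hIJ e; rewrite in_setD negb_and negbK => /orP [heI|heJ].
    * apply: ((hx e heI J hJ).2 (subsetP hIJ _ heI)); by rewrite eqxx.
    * apply: ((hx i0 hi0 J hJ).2 (subsetP hIJ _ hi0)); by rewrite heJ orbT.
- move=> h i hi J hJ; split.
  + move=> hiJ; apply: (h J hJ).1; apply/subsetPn; by exists i.
  + move=> hiJ e he; case: (boolP (I \subset J)) => hIJ.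
    * apply: (h J hJ).2 => //; rewrite in_setD negb_and negbK.
      by case/orP: he => [/eqP ->|->]; rewrite ?hi ?orbT.
    * have h1 := (h J hJ).1 hIJ; rewrite /edgeok /blk !h1.
      by case: (_ < m); rewrite ?f1.
Qed.

Lemma Hsub_sub (K : group) (f : K -> K) (m : nat) (c : {set 'I_m.+1} -> bool) i :
  is_hom f -> is_subgroup (Hsub f c i).
Proof.
move=> hf; split; [|split].
- move=> J hJ; split; first by move=> _ k; rewrite /= /pTone ffunE.
  move=> _ e _; rewrite /edgeok /blk /= /pTone !ffunE.
  by case: (_ < m); rewrite ?(hom1 hf).
- move=> x y hx hy J hJ; split.
  + move=> hiJ k; rewrite /= /pTmul ffunE ((hx J hJ).1 hiJ) ((hy J hJ).1 hiJ).
    exact: gmul1x.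
  + move=> hiJ e he; have ex := (hx J hJ).2 hiJ e he; have ey := (hy J hJ).2 hiJ e he.
    move: ex ey; rewrite /edgeok /blk /= /pTmul !ffunE.
    by case: (_ < m) => -> ->; rewrite ?hf.
- move=> x hx J hJ; split.
  + move=> hiJ k; rewrite /= /pTinv ffunE ((hx J hJ).1 hiJ); exact: ginv1.
  + move=> hiJ e he; have ex := (hx J hJ).2 hiJ e he.
    move: ex; rewrite /edgeok /blk /= /pTinv !ffunE.
    by case: (_ < m) => ->; rewrite ?(homV _ hf).
Qed.

Lemma Int_sub (K : group) (f : K -> K) (m : nat) (c : {set 'I_m.+1} -> bool) I :
  is_hom f -> is_subgroup (Int f c I).
Proof.
move=> hf; split; [|split].
- move=> i _; exact: (Hsub_sub c i hf).1.
- move=> x y hx hy i hi; apply: (Hsub_sub c i hf).2.1; [exact: hx | exact: hy].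
- move=> x hx i hi; apply: (Hsub_sub c i hf).2.2; exact: hx.
Qed.


Definition m0 (m : nat) (I J : {set 'I_m.+1}) : 'I_m.+1 := odflt ord0 [pick k in J :\: I].

Definition psi (K : group) (g : K -> K) (m : nat) (c : {set 'I_m.+1} -> bool)
  (I : {set 'I_m.+1}) (t : pT K (Tsp m)) : pT K (Tsp m) :=
  [ffun p : Tsp m => if c p.1 then
     (if I \subset p.1 then Phi g (m0 I p.1) (fun k => t (p.1, root (erel (p.1 :\: I)) k)) p.2
      else gone K) else t p].

Lemma m0_in (m : nat) (I J : {set 'I_m.+1}) :
  I \subset J -> J != I -> m0 I J \in J :\: I.
Proof.
move=> hIJ hJI; rewrite /m0; case: pickP => [k hk|h] //=.
exfalso; move/negP: hJI; apply; rewrite eqEsubset hIJ andbT.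
apply/subsetP => k hk; move: (h k); rewrite in_setD hk andbT.
by move/negbT; rewrite negbK.
Qed.

Lemma psi_hom (K : group) (g : K -> K) (m : nat) (c : {set 'I_m.+1} -> bool) I :
  is_hom g -> is_hom (psi g c I).
Proof.
move=> hg t u; rewrite /= /pTmul; apply/ffunP => p; rewrite !ffunE /=.
case: (c p.1); last by [].
case: (I \subset p.1); last by rewrite gmul1x.
by rewrite /Phi !ffunE; case: ifP; rewrite ?hg.
Qed.

Lemma psi_in (K : group) (f g : K -> K) (m : nat) (c : {set 'I_m.+1} -> bool) I t :
  injective f -> cancel g f -> f (gone K) = gone K -> I != set0 -> c I = false ->
  Int f c I (psi g c I t).
Proof.
move=> finj gK f1 hI hcI; apply/(intP _ _ f1 hI) => J hJ; split.
- by move=> hIJ k; rewrite ffunE /= hJ (negbTE hIJ).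
- move=> hIJ e he.
  have hJI : J != I by apply/eqP => eJI; rewrite eJI hcI in hJ.
  have hne : e != m0 I J by apply/eqP => ee; move: he; rewrite ee m0_in.
  apply/(edge_phi _ finj hne).
  have key : forall j, Phi f (m0 I J) (blk (psi g c I t) J) j
                       = t (J, root (erel (J :\: I)) j).
    by move=> j; rewrite /Phi /blk ffunE /= hJ hIJ /Phi; case: (_ <= _); rewrite ?gK.
  by rewrite !key root_succ.
Qed.

Definition tt (K : group) (f : K -> K) (m : nat) (c : {set 'I_m.+1} -> bool)
  (I : {set 'I_m.+1}) (x : pT K (Tsp m)) : pT K (Tsp m) :=
  [ffun p : Tsp m => if c p.1 && (I \subset p.1) then Phi f (m0 I p.1) (blk x p.1) p.2 else x p].

Lemma psi_onto (K : group) (f g : K -> K) (m : nat) (c : {set 'I_m.+1} -> bool) I x :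
  injective f -> cancel f g -> f (gone K) = gone K -> I != set0 -> c I = false ->
  Int f c I x -> psi g c I (tt f c I x) = x.
Proof.
move=> finj fK f1 hI hcI hx; have hx' := (intP _ _ f1 hI).1 hx.
apply/(@ffunP (Tsp m) (fun _ => carrier K)) => [[J j]]; rewrite ffunE /=.
case hJ: (c J); last by rewrite ffunE /= hJ.
case: (boolP (I \subset J)) => hIJ; last by rewrite ((hx' J hJ).1 hIJ).
have hJI : J != I by apply/eqP => eJI; rewrite eJI hcI in hJ.
have hz : forall e, e \notin J :\: I ->
    Phi f (m0 I J) (blk x J) (succ e) = Phi f (m0 I J) (blk x J) e.
  move=> e he; have hne : e != m0 I J by apply/eqP => ee; move: he; rewrite ee m0_in.
  apply/(edge_phi _ finj hne); exact: (hx' J hJ).2.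
have key : forall k, tt f c I x (J, root (erel (J :\: I)) k) = Phi f (m0 I J) (blk x J) k.
  by move=> k; rewrite ffunE /= hJ hIJ /= (root_eq _ hz).
rewrite /Phi; case: ifP => hj; rewrite key /Phi hj ?fK //.
Qed.

Lemma fix_of (K : group) (f : K -> K) (m : nat) (c : {set 'I_m.+1} -> bool) I x :
  f (gone K) = gone K -> I != set0 -> c I = true ->
  Int f c I x -> f (x (I, ord0)) = x (I, ord0).
Proof.
move=> f1 hI hcI hx.
have he : forall e, edgeok f (blk x I) e.
  move=> e; have h2 := ((intP _ _ f1 hI).1 hx I hcI).2 (subxx I).
  by apply: h2; rewrite setDv inE.
have hk : forall k, k < m.+1 -> blk x I (inord k) = blk x I ord0.
  elim=> [|k IH] hkm.
  - by congr blk; apply/val_inj; rewrite /= inordK.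
  - have hkm' : k < m by [].
    have := he (inord k); rewrite /edgeok /succ inordK ?hkm' ?(ltnW hkm) // => ->.
    exact: IH (ltnW hkm).
have := he (inord m); rewrite /edgeok inordK // ltnn hk //.
Qed.

Lemma fix_in (K : group) (f : K -> K) (m : nat) (c : {set 'I_m.+1} -> bool) I a :
  f (gone K) = gone K -> I != set0 -> f a = a ->
  Int f c I ([ffun p : Tsp m => if p.1 == I then a else gone K] : pT K (Tsp m)).
Proof.
move=> f1 hI fa; apply/(intP _ _ f1 hI) => J hJ; split.
- move=> hIJ k; rewrite ffunE /=; case: eqP => // eJI.
  by rewrite eJI subxx in hIJ.
- move=> _ e _; rewrite /edgeok /blk !ffunE /=.
  by case: (J == I); case: (_ < m).
Qed.

Unset Implicit Arguments.

Theorem theoremA (G : group)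
  (hyp : forall n : nat, 0 < n ->
     exists (K : group) (f : K -> K),
       fg_group K /\ is_automorphism f /\
       ~ fg_subgroup (fun x : K => f x = x) /\
       embeds (power K n) G) :
  intersection_saturated G.
Proof.
move=> [|m] hn // c.
have hcard : 0 < #|Tsp m| by apply/card_gt0P; exists (set0, ord0).
have [K [f [Kfg [[fhom fbij] [nfix [emb0 [emb0hom emb0inj]]]]]]] := hyp _ hcard.
case: fbij => g fK gK.
have finj : injective f := can_inj fK.
have f1 : f (gone K) = gone K := hom1 fhom.
have ghom : is_hom g by move=> a b; apply: finj; rewrite fhom !gK.
pose emb (x : pT K (Tsp m)) : G := emb0 [ffun k : 'I_#|Tsp m| => x (enum_val k)].
have emb_hom : is_hom emb.
  move=> x y; rewrite /emb -emb0hom; congr emb0.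
  by apply/ffunP => k; rewrite /= /pw_mul /pTmul !ffunE.
have emb_inj : injective emb.
  move=> x y /emb0inj /ffunP h; apply/ffunP => p.
  by have := h (enum_rank p); rewrite !ffunE enum_rankK.
pose Hs (i : 'I_m.+1) : G -> Prop := fun z => exists x, Hsub f c i x /\ emb x = z.
exists Hs; split.
  by move=> i; apply: img_sub => //; apply: Hsub_sub.
move=> I hI.
have eqI : forall z, (forall i, i \in I -> Hs i z) <-> exists x, Int f c I x /\ emb x = z.
  move=> z; split.
  - have [i0 hi0] := set0Pn _ hI.
    move=> h; have [x0 [_ hx0]] := h i0 hi0; exists x0; split=> // i hi.
    have [x [hx ex]] := h i hi.
    by have <- : x = x0 by apply: emb_inj; rewrite ex hx0.
  - by move=> [x [hx <-]] i hi; exists x; split=> //; apply: hx.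
split.
- move=> hfg; case hc: (c I) => //; exfalso; apply: nfix.
  have h1 := fg_ext eqI hfg.
  have h2 := fg_pre emb_hom emb_inj (Int_sub c I fhom) h1.
  pose pr (x : pT K (Tsp m)) : K := x (I, ord0).
  have prh : is_hom pr by move=> x y; rewrite /pr /= /pTmul ffunE.
  have h3 := img_fg prh h2.
  apply: (fg_ext _ h3) => a; split.
  + move=> [x [hx <-]]; exact: fix_of hx.
  + move=> fa; exists ([ffun p : Tsp m => if p.1 == I then a else gone K] : pT K (Tsp m)).
    split; first exact: fix_in.
    by rewrite /pr ffunE /= eqxx.
- move=> hc.
  have h1 := img_fg (psi_hom c I ghom) (pow_fg (Tsp m) Kfg).
  have h2 : fg_subgroup (Int f c I).
    apply: (fg_ext _ h1) => x; split.
    + move=> [t [_ <-]]; exact: psi_in.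
    + move=> hx; exists (tt f c I x); split=> //; exact: psi_onto.
  have h3 := img_fg emb_hom h2.
  exact: (fg_ext (fun z => iff_sym (eqI z)) h3).
Qed.
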